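(* Let $n=p_1p_2\cdots p_r$, where $r\geq 3$ and $p_1<p_2<\cdots<p_r$ are primes. Then $$\delta(\mathcal{P}(C_n))=\min\{\deg(p_sp_{s+1}\cdots p_r) : 2\leq s\leq r\}.$$
   Context: For a finite group $G$, the power graph $\mathcal{P}(G)$ is the simple undirected graph with vertex set $G$ in which two distinct vertices are adjacent if one is an integral power of the other. $C_n$ denotes the cyclic group of order $n$, identified with $\mathbb{Z}_n=\{0,1,\ldots,n-1\}$, so a positive divisor $d<n$ of $n$ is regarded as the element $d\in\mathbb{Z}_n$. $\deg(a)$ is the degree of vertex $a$ in $\mathcal{P}(C_n)$ and $\delta$ denotes minimum degree. *)

(* Defs.v *)
From mathcomp Require Import all_boot.
Set Implicit Arguments. Unset Strict Implicit. Unset Printing Implicit Defensive.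

(* The cyclic group C_n is Z_n = {0,...,n-1} with addition mod n.
   The integral powers of a in C_n (additively) are the multiples k*a mod n,
   k an integer; since k only matters mod n, k ranges over 0..n-1. *)
Definition is_power (n a b : nat) : bool :=
  [exists k : 'I_n, b == (k * a) %% n].

Definition pg_adj (n a b : nat) : bool :=
  (a != b) && (is_power n a b || is_power n b a).

Definition pg_deg (n a : nat) : nat :=
  #|[set b : 'I_n | pg_adj n (a %% n) (val b)]|.

(* Minimum degree of P(C_n) (n >= 1); n is an upper bound for all degrees. *)
Definition pg_mindeg (n : nat) : nat :=
  \big[minn/n]_(a < n) pg_deg n a.

(* Main.v *)
Require Import Defs.
From mathcomp Require Import all_boot zify.
Set Implicit Arguments. Unset Strict Implicit.


Lemma sum_count (P : pred nat) s : \sum_(i <- s) P i = count P s.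
Proof. by elim: s => [|x s IH]; rewrite ?big_nil ?big_cons //= IH. Qed.

Lemma tot_count m : totient m = count (coprime m) (iota 0 m).
Proof. by rewrite totient_count_coprime sum_count /index_iota subn0. Qed.

Lemma tot_le m : totient m <= m.
Proof. by rewrite tot_count; apply: leq_trans (count_size _ _) _; rewrite size_iota. Qed.

Lemma count_periodic m q (P : pred nat) : 0 < m ->
  count (fun b => P (b %% m)) (iota 0 (q * m)) = q * count P (iota 0 m).
Proof.
move=> m0; elim: q => [|q IH]; first by rewrite mul0n.
rewrite mulSnr iotaD count_cat IH add0n -(addn0 (q*m)) iotaDl count_map.
rewrite mulSnr; congr (_ + _); apply: eq_in_count => i /=.
rewrite mem_iota add0n => /andP[_ lt]; by rewrite modnMDl modn_small.
Qed.

Lemma count_mult g m (P : pred nat) : 0 < g ->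
  count (fun b => (g %| b) && P b) (iota 0 (m * g)) = count (fun c => P (c * g)) (iota 0 m).
Proof.
move=> g0; elim: m => [|m IH]; first by rewrite mul0n.
rewrite mulSnr iotaD count_cat IH add0n -(addn0 (m*g)) iotaDl count_map.
rewrite -addn1 iotaD count_cat /= add0n addn0; congr (_ + _).
clear IH; case: g g0 => [//|g] _.
rewrite -add1n iotaD count_cat /= addn0 dvdn_addr ?dvdn_mull // dvdn0 addn0.
rewrite (eq_in_count (a2 := pred0)) ?count_pred0 ?addn0 //.
move=> i; rewrite mem_iota => /andP[i1 i2] /=.
rewrite dvdn_addr ?dvdn_mull //.
case H: (g.+1 %| i) => //=; have := dvdn_leq i1 H; lia.
Qed.

Lemma card_count n (Q : pred nat) : #|[set b : 'I_n | Q (val b)]| = count Q (iota 0 n).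
Proof.
rewrite cardsE cardE -val_enum_ord count_map /enum_mem size_filter.
by rewrite (@eq_filter _ _ predT) // filter_predT.
Qed.

Lemma is_powerE n a b : 0 < n -> b < n -> is_power n a b = (gcdn a n %| b).
Proof.
move=> n0 bn; apply/existsP/idP.
  case=> k /eqP ->; rewrite /dvdn modn_dvdm ?dvdn_gcdr //.
  by rewrite -/(dvdn _ _) dvdn_mull ?dvdn_gcdl.
case: (posnP a) => [->|a0].
  rewrite gcd0n => H; have b0 : b = 0.
    by case: b H bn => // b H bn; have := dvdn_leq (isT : 0 < b.+1) H; lia.
  by exists (Ordinal n0); rewrite b0 mul0n mod0n.
move=> /dvdnP [c bE]; subst b.
case: (egcdnP n a0) => km kn E _.
exists (Ordinal (ltn_pmod (c * km) n0)) => /=.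
rewrite modnMml -mulnA E mulnDr mulnA modnMDl modn_small //.
Qed.

Lemma gcd_dvd_iff b g m : coprime g m -> (gcdn b (g * m) %| g) = coprime b m.
Proof.
move=> cgm; apply/idP/idP.
  move=> H; rewrite /coprime -dvdn1 -(eqP cgm) dvdn_gcd dvdn_gcdr andbT.
  apply: dvdn_trans H; rewrite dvdn_gcd dvdn_gcdl /=.
  exact: dvdn_trans (dvdn_gcdr _ _) (dvdn_mull _ _).
move=> cbm; by rewrite mulnC Gauss_gcdr // dvdn_gcdr.
Qed.

Lemma count_split (T : Type) (P Q : pred T) s :
  count P s = count (fun x => Q x && P x) s + count (fun x => ~~ Q x && P x) s.
Proof. elim: s => [|x s IH] //=; rewrite IH; case: (Q x); case: (P x) => /=; lia. Qed.

Lemma degE n a : 0 < n -> a < n -> coprime (gcdn a n) (n %/ gcdn a n) ->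
  pg_deg n a = n %/ gcdn a n + gcdn a n * totient (n %/ gcdn a n)
               - totient (n %/ gcdn a n) - 1.
Proof.
move=> n0 an.
set g := gcdn a n; set m := n %/ g => cgm.
have g0 : 0 < g by rewrite gcdn_gt0 n0 orbT.
have nE : n = m * g by rewrite divnK // dvdn_gcdr.
rewrite /pg_deg modn_small // card_count.
pose Z := fun b => (g %| b) || coprime b m.
have -> : count (pg_adj n a) (iota 0 n) = count (fun b => (b != a) && Z b) (iota 0 n).
  apply: eq_in_count => b; rewrite mem_iota add0n => /andP[_ bn] /=.
  rewrite /pg_adj !is_powerE // eq_sym; congr (_ && (_ || _)).
  have -> : (gcdn b n %| a) = (gcdn b n %| g) by rewrite /g dvdn_gcd dvdn_gcdr andbT.
  by rewrite {1}nE mulnC gcd_dvd_iff.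
have Ha : count (fun b => (b == a) && Z b) (iota 0 n) = 1.
  rewrite (@eq_in_count _ _ (pred1 a)).
    by rewrite count_uniq_mem ?iota_uniq // mem_iota add0n an.
  move=> b _ /=; case: eqP => //= ->; by rewrite /Z dvdn_gcdl.
have HZ := count_split Z (pred1 a) (iota 0 n).
have HU := count_predUI (fun b => g %| b) (fun b => coprime b m) (iota 0 n).
have H1 : count (fun b => g %| b) (iota 0 n) = m.
  rewrite nE (@eq_count _ _ (fun b => (g %| b) && true)); last by move=> x; rewrite andbT.
  by rewrite count_mult // count_predT size_iota.
have H2 : count (fun b => coprime b m) (iota 0 n) = g * totient m.
  have m0 : 0 < m by rewrite lt0n; apply/eqP => m0; move: nE; rewrite m0; lia.
  have := count_periodic g (fun x => coprime x m) m0 => /= HP.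
  rewrite nE mulnC -(@eq_count _ (fun b => coprime (b %% m) m)); last first.
    by move=> x /=; rewrite coprime_modl.
  by rewrite HP tot_count; congr (_ * _); apply: eq_count => y; rewrite /= coprime_sym.
have H3 : count (predI (fun b => g %| b) (fun b => coprime b m)) (iota 0 n) = totient m.
  rewrite nE count_mult // tot_count; apply: eq_count => x /=.
  by rewrite coprimeMl cgm andbT coprime_sym.
have -> : count (fun b => (b != a) && Z b) (iota 0 n) = count Z (iota 0 n) - 1.
  by rewrite (count_split Z (pred1 a)) Ha addKn.
have -> : count Z (iota 0 n) = count (predU (fun b => g %| b) (fun b => coprime b m)) (iota 0 n) by [].
lia.
Qed.

Definition NN (p : nat -> nat) j := \prod_(1 <= i < j.+1) p i.

Lemma NN0 p : NN p 0 = 1.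
Proof. by rewrite /NN big_geq. Qed.

Lemma NNrec p j : NN p j.+1 = NN p j * p j.+1.
Proof. by rewrite /NN big_nat_recr. Qed.

Lemma pmono r (p : nat -> nat) : (forall i, 1 <= i < r -> p i < p i.+1) ->
  forall i j, 1 <= i -> i < j -> j <= r -> p i < p j.
Proof.
move=> hm i; elim=> [|j IH] // i1 ij jr.
have := hm j; rewrite ltnS in ij; case: (ltngtP i j) ij jr => // [ij _ jr|<- _ jr] h.
  have := IH i1 ij (ltnW jr); have : 0 < j < r by lia.
  move/h; lia.
by apply: h; rewrite i1.
Qed.

Lemma NNpos r p : (forall i, 1 <= i <= r -> prime (p i)) -> forall j, j <= r -> 0 < NN p j.
Proof.
move=> hp; elim=> [|j IH] jr; first by rewrite NN0.
rewrite NNrec muln_gt0 IH ?(ltnW jr) // prime_gt0 // hp //.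
Qed.

Lemma NNcop r p : (forall i, 1 <= i <= r -> prime (p i)) ->
  (forall i, 1 <= i < r -> p i < p i.+1) ->
  forall j k, j < k -> k <= r -> coprime (p k) (NN p j).
Proof.
move=> hp hm; elim=> [|j IH] k jk kr; first by rewrite NN0 coprimen1.
have k0 : 0 < k <= r by rewrite kr andbT; lia.
have j0 : 0 < j.+1 <= r by rewrite (ltnW (leq_trans jk kr)).
rewrite NNrec coprimeMr IH ?(ltnW jk) //= prime_coprime ?hp //.
rewrite dvdn_prime2 ?hp //.
have := pmono hm (isT : 0 < j.+1) jk kr; lia.
Qed.

Definition RR m D := [/\ totient D <= totient m, D - totient D <= m - totient m
  & totient D * m <= totient m * D].

Lemma RR_step P D q q' : 2 <= q' <= q -> RR P D -> prime q -> prime q' ->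
  coprime P q -> coprime D q' ->
  RR (P * q) (D * q').
Proof.
move=> /andP[q2 qq] [h1 h2 h3] pq pq' cP cD.
rewrite /RR !totient_coprime // (totient_prime pq) (totient_prime pq').
have tP := tot_le P; have tD := tot_le D.
set Q := totient P in h1 h2 h3 tP *; set Q' := totient D in h1 h2 h3 tD *.
have e1 : Q' * q'.-1 <= Q * q.-1 by apply: leq_mul => //; lia.
split => //.
  have e2 : (D - Q') * q' <= (P - Q) * q by apply: leq_mul.
  have e3 : D * q' - Q' * q'.-1 = (D - Q') * q' + Q'.
    rewrite mulnBl; have : Q' * q'.-1 <= Q' * q' by rewrite leq_mul2l; lia.
    have : Q' * q' <= D * q' by rewrite leq_mul2r tD orbT.
    have -> : Q' * q' = Q' * q'.-1 + Q' by rewrite -mulnSr; congr (_ * _); lia.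
    lia.
  have e4 : P * q - Q * q.-1 = (P - Q) * q + Q.
    rewrite mulnBl; have : Q * q.-1 <= Q * q by rewrite leq_mul2l; lia.
    have : Q * q <= P * q by rewrite leq_mul2r tP orbT.
    have -> : Q * q = Q * q.-1 + Q by rewrite -mulnSr; congr (_ * _); lia.
    lia.
  rewrite e3 e4; lia.
have e5 : q'.-1 * q <= q.-1 * q'.
  have -> : q'.-1 * q = q' * q - q by rewrite -subn1 mulnBl mul1n.
  have -> : q.-1 * q' = q * q' - q' by rewrite -subn1 mulnBl mul1n.
  rewrite [q * q']mulnC; lia.
have := leq_mul h3 e5.
have -> : Q' * P * (q'.-1 * q) = Q' * q'.-1 * (P * q) by rewrite !mulnA; congr (_ * _); rewrite -!mulnA [P * _]mulnC.
have -> : Q * D * (q.-1 * q') = Q * q.-1 * (D * q') by rewrite !mulnA; congr (_ * _); rewrite -!mulnA [D * _]mulnC.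
done.
Qed.

Lemma main_ind r p : (forall i, 1 <= i <= r -> prime (p i)) ->
  (forall i, 1 <= i < r -> p i < p i.+1) ->
  forall j, j <= r -> forall m, m %| NN p j ->
  coprime m (NN p j %/ m) /\ exists2 k, k <= j & RR m (NN p k).
Proof.
move=> hp hm; elim=> [|j IH] jr m.
  rewrite NN0 dvdn1 => /eqP ->; split => //; exists 0 => //.
  by rewrite NN0 /RR; split.
have qp : prime (p j.+1) by apply: hp; rewrite jr.
have cq := NNcop hp hm (ltnSn j) jr.
rewrite NNrec => mdiv.
case: (boolP (p j.+1 %| m)) => [qm|nqm].
  set q := p j.+1 in qp cq mdiv qm *.
  have q0 : 0 < q by rewrite prime_gt0.
  set m0 := m %/ q; have mE : m = m0 * q by rewrite divnK.
  have m0d : m0 %| NN p j by rewrite -(dvdn_pmul2r q0) -mE.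
  have [cop0 [k0 k0j R0]] := IH (ltnW jr) m0 m0d.
  split.
    rewrite mE divnMr // coprimeMl cop0 /=.
    apply: (coprime_dvdr _ cq); by rewrite -{2}(divnK m0d) dvdn_mulr.
  have hk : 0 < k0.+1 <= r by rewrite (leq_ltn_trans k0j jr).
  exists k0.+1 => //.
  rewrite mE NNrec; apply: RR_step => //.
  - rewrite prime_gt1 ?hp //=.
    case: (ltngtP k0 j) k0j => // [lt _|-> _] //.
    by apply: ltnW; apply: (pmono hm) => //.
  - by apply: hp.
  - by rewrite coprime_sym (coprime_dvdr m0d cq).
  - by rewrite coprime_sym; apply: (NNcop hp hm) => //; case/andP: hk.
have cm : coprime m (p j.+1) by rewrite coprime_sym prime_coprime.
rewrite Gauss_dvdl // in mdiv.
have [cop [k kj R]] := IH (ltnW jr) m mdiv.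
split; last by exists k => //; apply: leq_trans kj _.
by rewrite -divn_mulAC // coprimeMr cop cm.
Qed.

Lemma bigmin_le (s : seq nat) d (F : nat -> nat) x :
  x \in s -> \big[minn/d]_(i <- s) F i <= F x.
Proof.
elim: s => [//|y s IH]; rewrite in_cons big_cons => /orP[/eqP ->|xs].
  exact: geq_minl.
exact: leq_trans (geq_minr _ _) (IH xs).
Qed.

Lemma bigmin_le_d (s : seq nat) d (F : nat -> nat) : \big[minn/d]_(i <- s) F i <= d.
Proof.
elim: s => [|y s IH]; rewrite ?big_nil ?big_cons //.
exact: leq_trans (geq_minr _ _) IH.
Qed.

Lemma le_bigmin (s : seq nat) d (F : nat -> nat) x :
  x <= d -> (forall i, i \in s -> x <= F i) -> x <= \big[minn/d]_(i <- s) F i.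
Proof.
move=> xd; elim: s => [|y s IH] H; rewrite ?big_nil ?big_cons //.
by rewrite leq_min H ?mem_head //=; apply: IH => i hi; apply: H; rewrite in_cons hi orbT.
Qed.

Lemma NNdvd p k j : k <= j -> NN p k %| NN p j.
Proof.
elim: j => [|j IH]; first by rewrite leqn0 => /eqP ->.
rewrite leq_eqVlt => /orP[/eqP -> //|]; rewrite ltnS => kj.
by rewrite NNrec dvdn_mulr // IH.
Qed.

Lemma totient1 : totient 1 = 1.
Proof. by []. Qed.

Unset Implicit Arguments.

Theorem lemma3p1 (r : nat) (p : nat -> nat) :
  3 <= r ->
  (forall i, 1 <= i <= r -> prime (p i)) ->
  (forall i, 1 <= i < r -> p i < p i.+1) ->
  pg_mindeg (\prod_(1 <= i < r.+1) p i) =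
  \big[minn/(\prod_(1 <= i < r.+1) p i)]_(2 <= s < r.+1)
     pg_deg (\prod_(1 <= i < r.+1) p i) (\prod_(s <= i < r.+1) p i).
Proof.
move=> r3 hp hm.
rewrite -/(NN p r); set n := NN p r.
have n0 : 0 < n := NNpos hp (leqnn r).
have sqf : forall g, g %| n -> coprime g (n %/ g).
  by move=> g H; case: (main_ind hp hm (leqnn r) H).
pose G m := m + (n %/ m) * totient m - totient m - 1.
have pos_div : forall m, m %| n -> 0 < m.
  by move=> [|m] //; rewrite dvd0n => /eqP n00; move: n0; rewrite n00.
have degG : forall a, a < n -> pg_deg n a = G (n %/ gcdn a n).
  move=> a an; rewrite degE // ?sqf ?dvdn_gcdr //.
  set g := gcdn a n; have dg : g %| n by apply: dvdn_gcdr.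
  have g0 := pos_div g dg.
  have nE : n = (n %/ g) * g by rewrite divnK.
  have m0 : 0 < n %/ g by rewrite divn_gt0 // dvdn_leq.
  rewrite /G; congr (_ - _ - _); congr (_ + _ * _).
  by rewrite {1}nE mulKn.
have Gmono : forall m D, m %| n -> D %| n -> RR m D -> G D <= G m.
  move=> m D mn Dn [h1 h2 h3].
  have m0 := pos_div m mn; have D0 := pos_div D Dn.
  have nm : n = (n %/ m) * m by rewrite divnK.
  have nD : n = (n %/ D) * D by rewrite divnK.
  set u := n %/ m in nm *; set v := n %/ D in nD *.
  have key : v * totient D <= u * totient m.
    rewrite -(leq_pmul2r m0).
    apply: (@leq_trans (v * (totient m * D))).
      by rewrite -mulnA leq_mul2l h3 orbT.
    by rewrite mulnCA -nD nm mulnCA mulnA.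
  have tm := tot_le m; have tD := tot_le D.
  have u0 : 0 < u by move: nm n0; case: (u) => //; rewrite mul0n => ->.
  have v0 : 0 < v by move: nD n0; case: (v) => //; rewrite mul0n => ->.
  have : totient m <= u * totient m by rewrite leq_pmull.
  have : totient D <= v * totient D by rewrite leq_pmull.
  rewrite /G -/u -/v; lia.
have Gn : G n = n - 1.
  by rewrite /G divnn n0 mul1n addnK.
have G1 : G 1 = n - 1.
  by rewrite /G divn1 totient1 muln1 addKn.
have NN1 : NN p 1 = p 1 by rewrite NNrec NN0 mul1n.
have p1 : prime (p 1) by apply: hp; lia.
have Gp1 : G (NN p 1) <= n - 1.
  rewrite NN1 /G.
  have d1 : p 1 %| n by rewrite -NN1 NNdvd; lia.
  have nE : n = (n %/ p 1) * p 1 by rewrite divnK.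
  set w := n %/ p 1 in nE *.
  have w0 : 0 < w by move: nE n0; case: (w) => //; rewrite mul0n => ->.
  rewrite totient_prime //.
  have := prime_gt1 p1.
  have e : w * (p 1).-1 = n - w by rewrite -subn1 mulnBr muln1 -nE.
  rewrite e; lia.
have termE : forall s, 2 <= s <= r ->
    pg_deg n (\prod_(s <= i < r.+1) p i) = G (NN p s.-1) /\ \prod_(s <= i < r.+1) p i < n.
  move=> s /andP[s2 sr].
  have nE : n = NN p s.-1 * \prod_(s <= i < r.+1) p i.
    rewrite /n /NN prednK ?(leq_trans _ s2) //.
    by rewrite -big_cat_nat //; lia.
  set E := \prod_(s <= i < r.+1) p i in nE *.
  have N2 : 1 < NN p s.-1.
    have -> : s.-1 = s.-2.+1 by lia.
    rewrite NNrec; have : 0 < NN p s.-2 by apply: (NNpos hp); lia.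
    have : 1 < p s.-2.+1 by apply: prime_gt1; apply: hp; lia.
    move=> h1 h2; apply: (leq_trans h1); rewrite leq_pmull //.
  have E0 : 0 < E by move: nE n0; case: (E) => //; rewrite muln0 => ->.
  have En : E < n by rewrite nE ltn_Pmull.
  split => //.
  rewrite degG //; congr G.
  have /gcdn_idPl -> : E %| n by rewrite nE dvdn_mull.
  by rewrite nE mulnK.
rewrite /pg_mindeg -(big_mkord (op := minn) (idx := n) xpredT (fun a => pg_deg n a)).
apply/eqP; rewrite eqn_leq; apply/andP; split.
  apply: le_bigmin; first exact: bigmin_le_d.
  move=> s; rewrite mem_index_iota ltnS => hs.
  have [_ En] := termE s hs.
  by apply: bigmin_le; rewrite mem_index_iota En.
apply: le_bigmin; first exact: bigmin_le_d.
move=> a; rewrite mem_index_iota /= => an.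
rewrite degG //.
set m := n %/ gcdn a n.
have mn : m %| n by apply/dvdnP; exists (gcdn a n); rewrite /m mulnC divnK ?dvdn_gcdr.
have [_ [k kr R]] := main_ind hp hm (leqnn r) mn.
have := Gmono m (NN p k) mn (NNdvd p kr) R.
have T2 : \big[minn/n]_(2 <= s < r.+1) pg_deg n (\prod_(s <= i < r.+1) p i) <= G (NN p 1).
  have [<- _] := termE 2 ltac:(lia).
  by apply: bigmin_le; rewrite mem_index_iota; lia.
case: (posnP k) => [k0|k0].
  rewrite k0 NN0 G1 => h; apply: leq_trans T2 (leq_trans Gp1 h).
case: (ltngtP k r) kr => // [kr _|-> _].
  have [<- _] := termE k.+1 ltac:(lia).
  move=> h; apply: leq_trans h; apply: bigmin_le; rewrite mem_index_iota; lia.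
rewrite -/n Gn => h; apply: leq_trans T2 (leq_trans Gp1 h).
Qed.
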